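(* Let $A$ be a set with a ternary operation $p\colon A^3\to A$ and two constants $0,1\in A$ satisfying, for all $a,b,c,b_1,b_2,b_3\in A$: (T1) $p(0,a,1)=a$; (T2) $p(a,b,a)=a$; (T3) $p(a,p(b_1,b_2,b_3),c)=p(p(a,b_1,c),b_2,p(a,b_3,c))$; (T4) $p(a,0,b)=a=p(b,1,a)$. Define $\bar{a}=p(1,a,0)$, $a\cdot b=p(0,a,b)$, $a\circ b=p(a,b,1)$ and $a+b=p(a,b,\bar a)$. Then the following conditions are equivalent: (i) $(A,\circ,\cdot,\bar{()},0,1)$ is a Boolean algebra (with $\circ$ as join, $\cdot$ as meet, $\bar{()}$ as complement, $0$ as bottom and $1$ as top); (ii) $(A,+,\cdot,0,1)$ is a Boolean ring; (iii) $p(a,b,c)=(\bar{b}\cdot a)\circ (b\cdot c)$ for all $a,b,c\in A$; (iv) $p(a,a,b)=a\cdot b$ for all $a,b\in A$; (v) $p(a,b,b)=a\circ b$ for all $a,b\in A$.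
   Context: A Boolean ring is a unitary ring (with additive identity $0$ and multiplicative identity $1$) in which every element $x$ satisfies $x\cdot x=x$. *)

(* Defs.v *)
Definition tbar {A : Type} (p : A -> A -> A -> A) (z o : A) (a : A) : A := p o a z.
Definition tdot {A : Type} (p : A -> A -> A -> A) (z : A) (a b : A) : A := p z a b.
Definition tcirc {A : Type} (p : A -> A -> A -> A) (o : A) (a b : A) : A := p a b o.
Definition tplus {A : Type} (p : A -> A -> A -> A) (z o : A) (a b : A) : A :=
  p a b (tbar p z o a).

Definition is_boolean_algebra {A : Type} (join meet : A -> A -> A)
  (compl : A -> A) (bot top : A) : Prop :=
  (forall a b c, join a (join b c) = join (join a b) c) /\
  (forall a b c, meet a (meet b c) = meet (meet a b) c) /\
  (forall a b, join a b = join b a) /\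
  (forall a b, meet a b = meet b a) /\
  (forall a b, join a (meet a b) = a) /\
  (forall a b, meet a (join a b) = a) /\
  (forall a b c, meet a (join b c) = join (meet a b) (meet a c)) /\
  (forall a, join a bot = a) /\
  (forall a, meet a top = a) /\
  (forall a, join a (compl a) = top) /\
  (forall a, meet a (compl a) = bot).

Definition is_unitary_ring {A : Type} (add mul : A -> A -> A) (zero one : A) : Prop :=
  (forall a b c, add a (add b c) = add (add a b) c) /\
  (forall a b, add a b = add b a) /\
  (forall a, add zero a = a) /\
  (forall a, exists b, add a b = zero) /\
  (forall a b c, mul a (mul b c) = mul (mul a b) c) /\
  (forall a, mul one a = a) /\
  (forall a, mul a one = a) /\
  (forall a b c, mul a (add b c) = add (mul a b) (mul a c)) /\
  (forall a b c, mul (add a b) c = add (mul a c) (mul b c)).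

Definition is_boolean_ring {A : Type} (add mul : A -> A -> A) (zero one : A) : Prop :=
  is_unitary_ring add mul zero one /\ (forall a, mul a a = a).

(* Main.v *)
Require Import Defs.
From Stdlib Require Import Setoid.
Set Default Proof Using "All".

Section BAabs.
Variable X : Type.
Variables (j m : X -> X -> X) (c : X -> X) (bot top : X).
Hypothesis ja : forall a b d, j a (j b d) = j (j a b) d.
Hypothesis ma : forall a b d, m a (m b d) = m (m a b) d.
Hypothesis jc : forall a b, j a b = j b a.
Hypothesis mc : forall a b, m a b = m b a.
Hypothesis jm : forall a b, j a (m a b) = a.
Hypothesis mj : forall a b, m a (j a b) = a.
Hypothesis dist : forall a b d, m a (j b d) = j (m a b) (m a d).
Hypothesis jb : forall a, j a bot = a.
Hypothesis mt : forall a, m a top = a.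
Hypothesis jcompl : forall a, j a (c a) = top.
Hypothesis mcompl : forall a, m a (c a) = bot.

Lemma BAid x y w :
  j (j (m x w) (m y w)) (m (c y) (m x (c w))) = j (m (c y) x) (m y w).
Proof.
  assert (s1 : m x w = j (m (m x w) y) (m (m x w) (c y))).
  { rewrite <- dist, jcompl, mt. reflexivity. }
  assert (s2 : j (m (m x w) y) (m y w) = m y w).
  { assert (E : m (m x w) y = m (m y w) x).
    { rewrite (mc (m x w) y), (mc x w), ma. reflexivity. }
    rewrite E, jc, jm. reflexivity. }
  assert (s3 : j (m (m x w) (c y)) (m (c y) (m x (c w))) = m (c y) x).
  { rewrite (mc (m x w) (c y)), <- dist, <- dist, jcompl, mt. reflexivity. }
  rewrite s1 at 1.
  rewrite (jc (m (m x w) y) (m (m x w) (c y))).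
  rewrite <- (ja (m (m x w) (c y)) (m (m x w) y) (m y w)).
  rewrite s2.
  rewrite (jc (m (m x w) (c y)) (m y w)).
  rewrite <- ja, s3, jc. reflexivity.
Qed.
End BAabs.

Section T.
Variable A : Type.
Variable p : A -> A -> A -> A.
Variables z o : A.
Hypothesis T1 : forall a, p z a o = a.
Hypothesis T2 : forall a b, p a b a = a.
Hypothesis T3 : forall a b1 b2 b3 c,
          p a (p b1 b2 b3) c = p (p a b1 c) b2 (p a b3 c).
Hypothesis T4a : forall a b, p a z b = a.
Hypothesis T4b : forall a b, p b o a = a.

Lemma bar_z : p o z z = o. Proof. apply T4a. Qed.
Lemma bar_o : p o o z = z. Proof. apply T4b. Qed.
Lemma G1 a : p o (p o a z) z = a.
Proof. rewrite (T3 o o a z z), bar_o, bar_z. apply T1. Qed.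
Lemma G2 a b c : p a (p o b z) c = p c b a.
Proof. rewrite (T3 a o b z c), T4b, T4a. reflexivity. Qed.
Lemma G2' a b c : p a b c = p c (p o b z) a.
Proof. rewrite G2. reflexivity. Qed.
Lemma G3 x y w : p o (p x y w) z = p (p o x z) y (p o w z).
Proof. apply T3. Qed.
Lemma DA a b c : p z (p z a b) c = p z a (p z b c).
Proof. rewrite (T3 z z a b c), T4a. reflexivity. Qed.
Lemma G6 x a b y : p x (p z a b) y = p x a (p x b y).
Proof. rewrite (T3 x z a b y), T4a. reflexivity. Qed.

Lemma bar_dot x y : p o (p z x y) z = p (p o y z) (p o x z) o.
Proof. rewrite G3, bar_z, G2'. reflexivity. Qed.

Section C4.
Hypothesis C4 : forall a b, p a a b = p z a b.

Lemma C5' a b : p a b b = p a b o.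
Proof.
  pose proof (C4 (p o b z) (p o a z)) as H.
  apply (f_equal (fun t => p o t z)) in H; simpl in H.
  rewrite (G3 (p o b z) (p o b z) (p o a z)), (G3 z (p o b z) (p o a z)) in H.
  rewrite !G1, bar_z in H.
  rewrite (G2 b b a), (G2 o b a) in H. exact H.
Qed.

Lemma dot_idem a : p z a a = a.
Proof. rewrite <- C4. apply T2. Qed.
Lemma mcompl a : p z a (p o a z) = z.
Proof. rewrite (G2' z a (p o a z)), C4. apply T2. Qed.
Lemma mcompl' a : p z (p o a z) a = z.
Proof. rewrite (G2' z (p o a z) a), G1, C4. apply T2. Qed.
Lemma jcompl a : p a (p o a z) o = o.
Proof. rewrite (G2' a (p o a z) o), G1, C5'. apply T2. Qed.
Lemma jcompl' a : p (p o a z) a o = o.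
Proof. rewrite (G2' (p o a z) a o), C5'. apply T2. Qed.

Lemma INV a x : p a (p a x (p o a z)) (p o a z) = x.
Proof.
  rewrite (T3 a a x (p o a z) (p o a z)), C4, mcompl, C5', jcompl. apply T1.
Qed.
Lemma cancel a x y : p a x (p o a z) = p a y (p o a z) -> x = y.
Proof. intro H. rewrite <- (INV a x), <- (INV a y), H. reflexivity. Qed.

Lemma Mlem a X : p (p z a X) X (p X a o) = X.
Proof.
  apply (cancel a).
  rewrite (T3 a (p z a X) X (p X a o) (p o a z)).
  rewrite (T3 a z a X (p o a z)), T4a, C4.
  rewrite <- (G2 o a X).
  rewrite (T3 a o (p o a z) X (p o a z)), T4b, C4.
  rewrite <- (T3 z a X (p o a z) (p a X (p o a z))).
  apply dot_idem.
Qed.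

Lemma AbsC1 a X : p (p z a X) X o = X.
Proof.
  rewrite <- C5'.
  pose proof (f_equal (fun t => p z t X) (Mlem a X)) as E; simpl in E.
  rewrite (T3 z (p z a X) X (p X a o) X) in E.
  rewrite DA, dot_idem in E.
  rewrite (T3 z X a o X), dot_idem, T4b, T2 in E.
  exact E.
Qed.

Lemma A1 Y c : p z Y (p Y c o) = Y.
Proof.
  pose proof (f_equal (fun t => p o t z) (AbsC1 (p o c z) (p o Y z))) as E; simpl in E.
  rewrite (G3 (p z (p o c z) (p o Y z)) (p o Y z) o), bar_o in E.
  rewrite (G3 z (p o c z) (p o Y z)), bar_z in E.
  rewrite !G1 in E. rewrite !G2 in E. exact E.
Qed.

Lemma A2 Y c : p Y (p z Y c) o = Y.
Proof. rewrite (T3 Y z Y c o), T4a, C4. apply A1. Qed.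

Lemma AbsC X Y : p (p z X Y) X o = X.
Proof.
  rewrite <- C5'. apply (cancel X).
  rewrite (T3 X (p z X Y) X X (p o X z)).
  rewrite (T3 X z X Y (p o X z)), T4a, C4, C4, mcompl.
  rewrite (G2' (p z X (p X Y (p o X z))) X z).
  rewrite <- DA, mcompl', T4a. reflexivity.
Qed.

Lemma LD a y : y = p (p z (p o a z) y) a (p z a y).
Proof.
  rewrite <- (T3 z (p o a z) a a y), C5', jcompl', T4b. reflexivity.
Qed.

Lemma Wl a b : p z (p z (p o a z) b) a = z.
Proof.
  set (w := p z (p z (p o a z) b) a).
  rewrite <- (dot_idem w).
  unfold w at 1. rewrite DA.
  assert (H : p z a w = z).
  { unfold w. rewrite <- DA, <- DA, mcompl, T4a, T4a. reflexivity. }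
  rewrite H. apply T2.
Qed.

Lemma Lrr a b : p z b a = p z a (p z b a).
Proof.
  rewrite (LD a (p z b a)) at 1.
  rewrite <- (DA (p o a z) b a), Wl.
  rewrite <- DA, dot_idem. reflexivity.
Qed.

Lemma comm a b : p z a b = p z b a.
Proof.
  pose proof (A1 (p z a b) a) as E.
  rewrite AbsC in E.
  rewrite (Lrr a b), <- DA. symmetry. exact E.
Qed.


Lemma ccomm a b : p a b o = p b a o.
Proof.
  pose proof (bar_dot (p o b z) (p o a z)) as E1.
  pose proof (bar_dot (p o a z) (p o b z)) as E2.
  rewrite !G1 in E1, E2.
  rewrite <- E1, <- E2, comm. reflexivity.
Qed.

Lemma dist a b c : p z a (p b c o) = p (p z a b) (p z a c) o.
Proof.
  rewrite comm, (T3 z b c o a), T4b.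
  rewrite (comm a c), G6, AbsC, (comm b a). reflexivity.
Qed.


Lemma C4_C1 : is_boolean_algebra (tcirc p o) (tdot p z) (tbar p z o) z o.
Proof.
  unfold is_boolean_algebra, tcirc, tdot, tbar.
  split. { intros a b c. rewrite (T3 a b c o o), T4b. reflexivity. }
  split. { intros a b c. symmetry. apply DA. }
  split. { apply ccomm. }
  split. { apply comm. }
  split. { apply A2. }
  split. { apply A1. }
  split. { apply dist. }
  split. { intro a. apply T4a. }
  split. { intro a. apply T1. }
  split. { apply jcompl. }
  apply mcompl.
Qed.

Lemma C4_C5 : forall a b, p a b b = p a b o.
Proof. apply C5'. Qed.

End C4.

Lemma C1_C3 (H : is_boolean_algebra (tcirc p o) (tdot p z) (tbar p z o) z o) :
  forall a b c, p a b c = tcirc p o (tdot p z (tbar p z o b) a) (tdot p z b c).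
Proof.
  unfold is_boolean_algebra, tcirc, tdot, tbar in *.
  destruct H as (ja & ma & jc & mc & jm & mj & dst & jb & mt & jcp & mcp).
  intros x y w.
  assert (midem : forall a, p z a a = a).
  { intro a. transitivity (p z a (p a (p z a a) o)). rewrite jm. reflexivity. apply mj. }
  assert (E1 : p x y w = p (p z (p x y w) w) (p z (p x y w) (p o w z)) o).
  { rewrite <- dst, jcp, mt. reflexivity. }
  assert (E2 : p z (p x y w) w = p (p z x w) (p z y w) o).
  { rewrite (T3 z x y w w), midem.
    rewrite (T3 (p z x w) z y w o), T4a.
    rewrite (jc (p z x w) w), (mc x w), jm. reflexivity. }
  assert (E3 : p z (p x y w) (p o w z) = p z (p o y z) (p z x (p o w z))).
  { rewrite (T3 z x y w (p o w z)), mcp. apply G2'. }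
  rewrite E1, E2, E3.
  pose proof (BAid A (fun a b => p a b o) (fun a b => p z a b) (fun a => p o a z) z o
     ja ma jc mc jm mj dst jb mt jcp mcp x y w) as B.
  cbv beta in B. exact B.
Qed.

Lemma C3_C4 (C3 : forall a b c, p a b c = tcirc p o (tdot p z (tbar p z o b) a) (tdot p z b c)) :
  forall a b, p a a b = tdot p z a b.
Proof.
  unfold tcirc, tdot, tbar in *.
  assert (H1 : forall x, p o x x = o).
  { intro x. pose proof (C3 o (p o x z) o) as E.
    rewrite T2, G1, T1, T1 in E.
    rewrite (G2' x (p o x z) o), G1 in E. symmetry. exact E. }
  assert (H2 : forall x, p z x (p o x z) = z).
  { intro x. pose proof (f_equal (fun t => p o t z) (H1 x)) as E. cbv beta in E.
    rewrite G3, bar_o in E. exact E. }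
  intros a b. rewrite (C3 a a b).
  pose proof (H2 (p o a z)) as E. rewrite G1 in E. rewrite E. apply T1.
Qed.

Lemma C4_C2 (C4 : forall a b, p a a b = tdot p z a b) : is_boolean_ring (tplus p z o) (tdot p z) z o.
Proof.
  unfold tdot in C4.
  pose proof (C1_C3 (C4_C1 C4)) as C3. unfold tcirc, tdot, tbar in C3.
  pose proof (comm C4) as cm. pose proof (ccomm C4) as ccm.
  pose proof (dot_idem C4) as di. pose proof (mcompl C4) as mcp.
  pose proof (mcompl' C4) as mcp'. pose proof (dist C4) as dst.
  assert (Kl : forall a b, p (p z a b) a (p o (p z a b) z) = p z (p o b z) a).
  { intros a b. rewrite (C3 (p z a b) a (p o (p z a b) z)).
    rewrite <- DA, mcp', T4a, T1, bar_dot, dst, mcp, T4a. apply cm. }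
  assert (dl : forall a b c, p z a (p b c (p o b z)) = p (p z a b) (p z a c) (p o (p z a b) z)).
  { intros a b c. rewrite (cm a (p b c (p o b z))), (T3 z b c (p o b z) a).
    rewrite (cm a c), G6, Kl, (cm b a). reflexivity. }
  unfold is_boolean_ring, is_unitary_ring, tplus, tdot, tbar.
  split; [|exact di].
  split. { intros a b c. rewrite (T3 a b c (p o b z) (p o a z)), G3, G1, G2. reflexivity. }
  split. { intros a b. rewrite (C3 a b (p o a z)), (C3 b a (p o b z)).
           rewrite (cm (p o b z) a), (cm b (p o a z)). apply ccm. }
  split. { intro a. rewrite bar_z. apply T1. }
  split. { intro a. exists a. rewrite C4. apply mcp. }
  split. { intros a b c. symmetry. apply DA. }
  split. { intro a. apply T4b. }
  split. { intro a. apply T1. }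
  split. { exact dl. }
  intros a b c. rewrite (cm (p a b (p o a z)) c), dl, (cm c a), (cm c b). reflexivity.
Qed.

Lemma C2_C4 (H : is_boolean_ring (tplus p z o) (tdot p z) z o) : forall a b, p a a b = tdot p z a b.
Proof.
  unfold is_boolean_ring, is_unitary_ring, tplus, tdot, tbar in *.
  destruct H as ((ra & rc & r0 & rinv & ma & m1l & m1r & dl & dr) & idem).
  assert (canc : forall x u v, p x u (p o x z) = p x v (p o x z) -> u = v).
  { intros x u v H. destruct (rinv x) as [y Hy].
    assert (E : forall w, p y (p x w (p o x z)) (p o y z) = w).
    { intro w. rewrite ra, (rc y x), Hy. apply r0. }
    rewrite <- (E u), <- (E v), H. reflexivity. }
  intros a b.
  assert (Hs : p a a (p o a z) = z).
  { pose proof (idem (p a a (p o a z))) as I.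
    rewrite (dl (p a a (p o a z)) a a) in I.
    assert (E1 : p z (p a a (p o a z)) a = p a a (p o a z)).
    { rewrite dr, idem. reflexivity. }
    rewrite E1 in I.
    apply (canc (p a a (p o a z))). rewrite I, T4a. reflexivity. }
  apply (canc a).
  rewrite (T3 a a a b (p o a z)), Hs, dl, idem. reflexivity.
Qed.

Lemma C5_C4 (C5 : forall a b, p a b b = tcirc p o a b) : forall a b, p a a b = tdot p z a b.
Proof.
  unfold tcirc, tdot in *.
  intros a b.
  pose proof (C5 (p o b z) (p o a z)) as H.
  apply (f_equal (fun t => p o t z)) in H; cbv beta in H.
  rewrite (G3 (p o b z) (p o a z) (p o a z)), (G3 (p o b z) (p o a z) o) in H.
  rewrite !G1, bar_o in H.
  rewrite (G2 b a a), (G2 b a z) in H. exact H.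
Qed.

End T.

Theorem theorem1 (A : Type) (p : A -> A -> A -> A) (z o : A)
  (T1 : forall a, p z a o = a)
  (T2 : forall a b, p a b a = a)
  (T3 : forall a b1 b2 b3 c,
          p a (p b1 b2 b3) c = p (p a b1 c) b2 (p a b3 c))
  (T4 : forall a b, p a z b = a /\ p b o a = a) :
  let bar := tbar p z o in
  let dot := tdot p z in
  let circ := tcirc p o in
  let plus := tplus p z o in
  let C1 := is_boolean_algebra circ dot bar z o in
  let C2 := is_boolean_ring plus dot z o in
  let C3 := forall a b c, p a b c = circ (dot (bar b) a) (dot b c) in
  let C4 := forall a b, p a a b = dot a b in
  let C5 := forall a b, p a b b = circ a b in
  (C1 <-> C2) /\ (C2 <-> C3) /\ (C3 <-> C4) /\ (C4 <-> C5).
Proof.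
  assert (T4a : forall a b, p a z b = a) by (intros a b; exact (proj1 (T4 a b))).
  assert (T4b : forall a b, p b o a = a) by (intros a b; exact (proj2 (T4 a b))).
  cbv zeta.
  pose proof (C4_C1 A p z o T1 T2 T3 T4a T4b) as W41.
  pose proof (C1_C3 A p z o T1 T2 T3 T4a T4b) as W13.
  pose proof (C3_C4 A p z o T1 T2 T3 T4a T4b) as W34.
  pose proof (C4_C2 A p z o T1 T2 T3 T4a T4b) as W42.
  pose proof (C2_C4 A p z o T1 T2 T3 T4a T4b) as W24.
  pose proof (C4_C5 A p z o T1 T2 T3 T4a T4b) as W45.
  pose proof (C5_C4 A p z o T1 T2 T3 T4a T4b) as W54.
  unfold tdot, tcirc in W41, W45 |- *.
  split; [split; intro H | split; [split; intro H | split; [split; intro H | split; intro H]]].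
  - exact (W42 (W34 (W13 H))).
  - exact (W41 (W24 H)).
  - exact (W13 (W41 (W24 H))).
  - exact (W42 (W34 H)).
  - exact (W34 H).
  - exact (W13 (W41 H)).
  - exact (W45 H).
  - exact (W54 H).
Qed.
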